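(* Let $\alpha\in(0,\pi/2]$ and let $(L,\theta)$ be a minimizer of problem $(\mathcal{P}_\alpha)$ whose curvature at both endpoints satisfies $\theta'(0)\le1$ and $\theta'(L)\le1$ (as is the case when the arc is externally tangent to the unit disk at its endpoints). Then $\theta'(0)=\theta'(L)$, $$\tfrac12\,\theta'(s)^2=\frac{1}{2\sin^2\alpha}\left(\int_0^\alpha\sqrt{\cos t}\,dt\right)^2\cos(\theta(s)-\alpha)\quad\text{for all } s\in[0,L],$$ and the minimal energy is $$E(\alpha):=\frac12\int_0^L\theta'(s)^2\,ds=\frac{1}{\sin\alpha}\left(\int_0^\alpha\sqrt{\cos t}\,dt\right)^2.$$
   Context: For $\alpha\in(0,\pi/2]$ and $L>0$, let $\mathcal{M}_{\alpha,L}$ be the set of $\theta\in H^1(0,L)$ with $\theta'\ge 0$ a.e., $\theta(0)=0$, $\theta(L)=2\alpha$, $\int_0^L\cos\theta(u)\,du=\sin2\alpha$ and $\int_0^L\sin\theta(u)\,du=1-\cos2\alpha$ ($\theta$ is the tangent angle of a convex arc parametrized by arc length from $(0,-1)$ to $(\sin2\alpha,-\cos2\alpha)$, and $\theta'$ is its curvature). Problem $(\mathcal{P}_\alpha)$ is to minimize $\frac12\int_0^L\theta'(s)^2\,ds$ over all $L>0$ and $\theta\in\mathcal{M}_{\alpha,L}$. *)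

(* Defs.v *)
From Stdlib Require Import Reals.
Open Scope R_scope.

Definition is_RInt (f : R -> R) (a b v : R) : Prop :=
  exists pr : Riemann_integrable f a b, RiemannInt pr = v.

Definition continuous_on_interval (f : R -> R) (a b : R) : Prop :=
  forall s, a <= s <= b ->
    forall eps, 0 < eps -> exists delta, 0 < delta /\
      forall t, a <= t <= b -> Rabs (t - s) < delta -> Rabs (f t - f s) < eps.

(* Admissible pair: length L, tangent angle theta with curvature k = theta'
   (theta(s) = int_0^s k), k >= 0, theta(0)=0, theta(L)=2 alpha, and the
   two endpoint constraints. *)
Definition admissible (alpha L : R) (theta k : R -> R) : Prop :=
  0 < L /\
  (forall s, 0 <= s <= L -> 0 <= k s) /\
  (forall s, 0 <= s <= L -> is_RInt k 0 s (theta s)) /\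
  theta L = 2 * alpha /\
  is_RInt (fun u => cos (theta u)) 0 L (sin (2 * alpha)) /\
  is_RInt (fun u => sin (theta u)) 0 L (1 - cos (2 * alpha)).

Definition has_energy (L : R) (k : R -> R) (v : R) : Prop :=
  is_RInt (fun s => (k s) ^ 2) 0 L (2 * v).

Definition is_minimizer (alpha L : R) (theta k : R -> R) (Emin : R) : Prop :=
  admissible alpha L theta k /\ has_energy L k Emin /\
  forall L' theta' k' v', admissible alpha L' theta' k' ->
    has_energy L' k' v' -> Emin <= v'.

(* Main.v *)
From Coquelicot Require Import Coquelicot.
From Stdlib Require Import Reals Lra ClassicalEpsilon.
Require Defs.
Open Scope R_scope.


Lemma defs_to_coq f a b v : Defs.is_RInt f a b v -> is_RInt f a b v.
Proof.
  intros [pr Hpr]. rewrite <- Hpr, <- (RInt_Reals f a b pr).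
  apply (RInt_correct (V:=R_CompleteNormedModule)), ex_RInt_Reals_1; exact pr.
Qed.

Lemma coq_to_defs f a b v : is_RInt f a b v -> Defs.is_RInt f a b v.
Proof.
  intros H. assert (E : ex_RInt f a b) by (exists v; exact H).
  exists (ex_RInt_Reals_0 f a b E). rewrite <- RInt_Reals.
  now apply is_RInt_unique.
Qed.

Lemma cont_eps (f : R -> R) x :
  (forall eps, 0 < eps -> exists d, 0 < d /\ forall y, Rabs (y - x) < d -> Rabs (f y - f x) < eps) ->
  continuous f x.
Proof.
  intros H. apply continuity_pt_filterlim.
  intros eps Heps. destruct (H eps Heps) as [d [Hd Hy]].
  exists d. split; auto. intros y [_ Hyd]. apply Hy. exact Hyd.
Qed.

Lemma eps_cont (f : R -> R) x : continuous f x ->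
  forall eps, 0 < eps -> exists d, 0 < d /\ forall y, Rabs (y - x) < d -> Rabs (f y - f x) < eps.
Proof.
  intros H. apply continuity_pt_filterlim in H.
  intros eps Heps. destruct (H eps Heps) as [d [Hd Hy]].
  exists d. split; auto. intros y Hyd. destruct (Req_dec x y) as [<-|Hne].
  rewrite Rminus_diag, Rabs_R0; lra.
  apply (Hy y). split; [split; [exact I | exact Hne] | exact Hyd].
Qed.

Lemma lip_cont (f : R -> R) M : 0 <= M ->
  (forall x y, Rabs (f x - f y) <= M * Rabs (x - y)) -> forall x, continuous f x.
Proof.
  intros HM H x. apply cont_eps. intros eps Heps.
  exists (eps / (M + 1)). split. apply Rdiv_lt_0_compat; lra.
  intros y Hy. eapply Rle_lt_trans. apply H.
  apply Rle_lt_trans with (M * (eps / (M+1))).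
  apply Rmult_le_compat_l; lra.
  apply Rlt_le_trans with ((M+1) * (eps / (M+1))).
  apply Rmult_lt_compat_r. apply Rdiv_lt_0_compat; lra. lra.
  right. field. lra.
Qed.

Definition clamp (a b x : R) := Rmax a (Rmin b x).

Lemma clamp_lip a b x y : Rabs (clamp a b x - clamp a b y) <= Rabs (x - y).
Proof.
  unfold clamp, Rmax, Rmin.
  repeat destruct Rle_dec; repeat destruct Rabs_case_pos; try (apply Rabs_case; intros); unfold Rabs; repeat destruct Rcase_abs; lra.
Qed.

Lemma clamp_in a b x : a <= b -> a <= clamp a b x <= b.
Proof. unfold clamp, Rmax, Rmin. intros; repeat destruct Rle_dec; lra. Qed.

Lemma clamp_id a b x : a <= x <= b -> clamp a b x = x.
Proof. unfold clamp, Rmax, Rmin. intros; repeat destruct Rle_dec; lra. Qed.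

Lemma ext_cont k a b : a <= b -> Defs.continuous_on_interval k a b ->
  forall x, continuous (fun x => k (clamp a b x)) x.
Proof.
  intros Hab Hk x. apply cont_eps. intros eps Heps.
  destruct (Hk (clamp a b x) (clamp_in a b x Hab) eps Heps) as [d [Hd Hy]].
  exists d. split; auto. intros y Hyx. apply Hy. apply clamp_in; auto.
  eapply Rle_lt_trans. apply clamp_lip. exact Hyx.
Qed.


Lemma exc (g : R -> R) a b : (forall x, continuous g x) -> ex_RInt g a b.
Proof. intros H. apply (ex_RInt_continuous (V:=R_CompleteNormedModule)). intros; apply H. Qed.

Lemma int_zero g a b : a < b -> (forall x, continuous g x) ->
  (forall x, a <= x <= b -> 0 <= g x) -> is_RInt g a b 0 -> forall s, a <= s <= b -> g s = 0.
Proof.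
  intros Hab Hc Hp Hi s Hs.
  destruct (Hp s Hs) as [Hgt|]; [|auto]. exfalso.
  destruct (eps_cont g s (Hc s) (g s / 2)) as [d [Hd Hy]]. lra.
  set (c := Rmax a (s - d/2)). set (e := Rmin b (s + d/2)).
  assert (Hc1 : a <= c) by (unfold c; apply Rmax_l).
  assert (He1 : e <= b) by (unfold e; apply Rmin_l).
  assert (Hce : c < e).
  { unfold c, e, Rmax, Rmin; repeat destruct Rle_dec; lra. }
  assert (Hsc : s - d/2 <= c) by (unfold c; apply Rmax_r).
  assert (Hse : e <= s + d/2) by (unfold e; apply Rmin_r).
  assert (I1 : 0 <= RInt g a c).
  { apply RInt_ge_0; [lra | apply exc; auto |]. intros; apply Hp; lra. }
  assert (I3 : 0 <= RInt g e b).
  { apply RInt_ge_0; [lra | apply exc; auto |]. intros; apply Hp; lra. }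
  assert (I2 : 0 < RInt g c e).
  { apply RInt_gt_0; auto. intros x Hx.
    assert (Hx' : Rabs (x - s) < d) by (apply Rabs_def1; lra).
    specialize (Hy x Hx'). apply Rabs_def2 in Hy. lra. }
  assert (Ht : RInt g a b = 0) by (apply is_RInt_unique; exact Hi).
  rewrite <- (RInt_Chasles g a c b) in Ht by (apply exc; auto).
  rewrite <- (RInt_Chasles g c e b) in Ht by (apply exc; auto).
  unfold plus in Ht; simpl in Ht. lra.
Qed.


Lemma is_RInt_lin (f g : R -> R) a b If Ig p q :
  is_RInt f a b If -> is_RInt g a b Ig ->
  is_RInt (fun x => p * f x + q * g x) a b (p * If + q * Ig).
Proof.
  intros Hf Hg.
  exact (is_RInt_plus _ _ a b _ _ (is_RInt_scal _ a b p _ Hf) (is_RInt_scal _ a b q _ Hg)).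
Qed.

Lemma is_RInt_scal' (f : R -> R) a b If p :
  is_RInt f a b If -> is_RInt (fun x => p * f x) a b (p * If).
Proof. intros Hf. apply (is_RInt_scal f a b p If Hf). Qed.

Lemma RInt_shift (f : R -> R) a b c : (forall x, continuous f x) ->
  RInt (fun t => f (t - c)) a b = RInt f (a - c) (b - c).
Proof.
  intros Hc.
  replace (a - c) with (1 * a + - c) by ring. replace (b - c) with (1 * b + - c) by ring.
  rewrite <- (RInt_comp_lin f 1 (-c) a b).
  - apply RInt_ext. intros x _. unfold scal; simpl; unfold mult; simpl. rewrite Rmult_1_l. f_equal; ring.
  - apply exc; auto.
Qed.

Lemma cmul (f g : R -> R) x : continuous f x -> continuous g x -> continuous (fun y => f y * g y) x.
Proof. intros; apply (continuous_mult f g); auto. Qed.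
Lemma cminus (f g : R -> R) x : continuous f x -> continuous g x -> continuous (fun y => f y - g y) x.
Proof. intros; apply (continuous_minus f g); auto. Qed.
Lemma cplus (f g : R -> R) x : continuous f x -> continuous g x -> continuous (fun y => f y + g y) x.
Proof. intros; apply (continuous_plus f g); auto. Qed.
Lemma cconst (c : R) x : continuous (fun _ : R => c) x.
Proof. apply continuous_const. Qed.
Lemma cid x : continuous (fun y : R => y) x.
Proof. apply continuous_id. Qed.
Lemma csq (f : R -> R) x : continuous f x -> continuous (fun y => (f y)^2) x.
Proof. intros H. apply (continuous_ext (fun y => f y * f y)). intros; simpl; ring. apply cmul; auto. Qed.

Lemma Th_props (kt : R -> R) : (forall x, continuous kt x) ->
  forall x, is_derive (fun s => RInt kt 0 s) x (kt x).
Proof.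
  intros Hc x. apply (is_derive_RInt kt (fun s => RInt kt 0 s) 0 x); [|apply Hc].
  apply filter_forall. intros y. apply (RInt_correct (V:=R_CompleteNormedModule)). apply exc; auto.
Qed.

Lemma partA alpha L theta k E :
  0 < alpha <= PI / 2 -> Defs.admissible alpha L theta k ->
  Defs.continuous_on_interval k 0 L -> Defs.has_energy L k E ->
  let D := RInt (fun t => sqrt (cos t)) (-alpha) alpha in
  let lam := D / (2 * sin alpha) in
  is_RInt (fun s => (k s - lam * sqrt (cos (theta s - alpha)))^2) 0 L (2*E - D^2/(2*sin alpha)) /\
  (exists G, (forall x, continuous G x) /\
     forall s, 0 <= s <= L -> G s = (k s - lam * sqrt (cos (theta s - alpha)))^2) /\
  theta 0 = 0 /\ (forall s, 0 <= s <= L -> 0 <= cos (theta s - alpha)).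
Proof.
  intros Ha [HL [Hk0 [Hth [HthL [Hcos Hsin]]]]] Hc HE D lam.
  apply defs_to_coq in Hcos. apply defs_to_coq in Hsin. apply defs_to_coq in HE.
  set (kt := fun s => k (clamp 0 L s)).
  assert (Hkt : forall x, continuous kt x) by (apply ext_cont; [lra | exact Hc]).
  set (Th := fun s => RInt kt 0 s).
  assert (HdTh : forall x, is_derive Th x (kt x)) by (apply Th_props; auto).
  assert (HcTh : forall x, continuous Th x).
  { intros x. apply (ex_derive_continuous (K:=R_AbsRing) (V:=R_NormedModule)). exists (kt x). apply HdTh. }
  assert (HkT : forall s, 0 <= s <= L -> kt s = k s).
  { intros s Hs. unfold kt. rewrite clamp_id; auto. }
  assert (HThe : forall s, 0 <= s <= L -> Th s = theta s).
  { intros s Hs. unfold Th. apply is_RInt_unique.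
    apply is_RInt_ext with k. intros x Hx. rewrite Rmin_left, Rmax_right in Hx by lra.
    symmetry; apply HkT; lra.
    apply defs_to_coq, Hth; auto. }
  assert (Hth0 : theta 0 = 0).
  { rewrite <- HThe by lra. unfold Th. exact (RInt_point (V:=R_CompleteNormedModule) 0 kt). }
  assert (Hsa : 0 < sin alpha) by (apply sin_gt_0; lra).
  assert (Hrange : forall s, 0 <= s <= L -> 0 <= theta s <= 2 * alpha).
  { intros s Hs. rewrite <- HThe by auto. rewrite <- HthL. rewrite <- (HThe L) by lra.
    unfold Th. split.
    - apply RInt_ge_0. lra. apply exc; auto. intros x Hx. unfold kt; rewrite clamp_id by lra. apply Hk0; lra.
    - rewrite <- (RInt_Chasles kt 0 s L) by (apply exc; auto).
      assert (0 <= RInt kt s L). { apply RInt_ge_0. lra. apply exc; auto. intros x Hx. unfold kt; rewrite clamp_id by lra. apply Hk0; lra. }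
      unfold plus; simpl. lra. }
  assert (Hcpos : forall s, 0 <= s <= L -> 0 <= cos (theta s - alpha)).
  { intros s Hs. specialize (Hrange s Hs). apply cos_ge_0; lra. }
  set (f := fun t => sqrt (cos (t - alpha))).
  assert (Hf : forall x, continuous f x).
  { intros x. unfold f. apply continuous_sqrt_comp, continuous_cos_comp, cminus; [apply cid|apply cconst]. }
  assert (Hsub := is_RInt_comp f Th kt 0 L (fun x _ => Hf (Th x)) (fun x _ => conj (HdTh x) (Hkt x))).
  assert (ETh0 : Th 0 = 0) by (rewrite HThe, Hth0; lra).
  assert (EThL : Th L = 2 * alpha) by (rewrite HThe, HthL; lra).
  rewrite ETh0, EThL in Hsub. unfold f in Hsub.
  rewrite (RInt_shift (fun t => sqrt (cos t)) 0 (2 * alpha) alpha) in Hsub.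
  2:{ intros x. apply continuous_sqrt_comp, continuous_cos_comp, cid. }
  replace (0 - alpha) with (-alpha) in Hsub by ring. replace (2 * alpha - alpha) with alpha in Hsub by ring.
  fold D in Hsub.
  assert (Hsub' : is_RInt (fun s => k s * sqrt (cos (theta s - alpha))) 0 L D).
  { eapply is_RInt_ext; [|exact Hsub]. intros x Hx. rewrite Rmin_left, Rmax_right in Hx by lra.
    unfold scal; simpl; unfold mult; simpl. rewrite HkT, HThe by lra. reflexivity. }
  assert (Hc2 : is_RInt (fun s => cos (theta s - alpha)) 0 L (2 * sin alpha)).
  { replace (2 * sin alpha) with (cos alpha * sin (2 * alpha) + sin alpha * (1 - cos (2 * alpha))).
    eapply is_RInt_ext; [|apply (is_RInt_lin _ _ 0 L _ _ (cos alpha) (sin alpha) Hcos Hsin)].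
    intros x _. simpl. rewrite cos_minus. ring.
    rewrite sin_2a, cos_2a_sin. assert (H := sin2_cos2 alpha). unfold Rsqr in H. nra. }
  split; [|split; [|split]].
  - assert (H1 := is_RInt_lin _ _ 0 L _ _ 1 (- 2 * lam) HE Hsub').
    assert (H2 := is_RInt_lin _ _ 0 L _ _ 1 (lam ^ 2) H1 Hc2).
    eapply is_RInt_ext; [|replace (2 * E - D ^ 2 / (2 * sin alpha)) with (1 * (1 * (2 * E) + - 2 * lam * D) + lam ^ 2 * (2 * sin alpha)) ; [exact H2|]].
    + intros x Hx. rewrite Rmin_left, Rmax_right in Hx by lra.
      assert (Hc' := Hcpos x ltac:(lra)).
      assert (Hsq := sqrt_sqrt _ Hc'). simpl. rewrite <- Hsq at 2. ring.
    + unfold lam. field. lra.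
  - exists (fun s => (kt s - lam * sqrt (cos (Th s - alpha)))^2). split.
    + intros x. apply csq, cminus; auto. apply cmul. apply cconst.
      apply continuous_sqrt_comp, continuous_cos_comp, cminus; auto. apply cconst.
    + intros s Hs. simpl. rewrite HkT, HThe by auto. reflexivity.
  - exact Hth0.
  - exact Hcpos.
Qed.


Definition hh (w : R) := / sqrt (1 - (sin w)^2 / 2).
Definition PP (w : R) := 2 * asin (sin w / sqrt 2).
Definition dPP (w : R) := sqrt 2 * cos w * hh w.

Lemma s2_facts : 0 < sqrt 2 /\ sqrt 2 * sqrt 2 = 2.
Proof. split. apply sqrt_lt_R0; lra. apply sqrt_sqrt; lra. Qed.

Lemma q_pos w : 1/2 <= 1 - (sin w)^2 / 2.
Proof. assert (H := SIN_bound w). assert (0 <= (1 - sin w) * (1 + sin w)) by (apply Rmult_le_pos; lra). assert (sin w ^2 <= 1) by (ring_simplify in H0; nra). lra. Qed.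

Lemma hh_pos w : 1 <= hh w.
Proof.
  unfold hh. assert (H := q_pos w). assert (H2 : 1 - (sin w)^2/2 <= 1) by (assert (0 <= sin w ^2) by apply pow2_ge_0; lra).
  assert (0 < sqrt (1 - (sin w)^2/2)) by (apply sqrt_lt_R0; lra).
  assert (sqrt (1 - (sin w)^2/2) <= 1) by (apply Rle_trans with (sqrt 1); [apply sqrt_le_1_alt; lra | rewrite sqrt_1; lra]).
  apply Rle_trans with (/1); [rewrite Rinv_1; lra | apply Rinv_le_contravar; lra].
Qed.

Lemma hh_inv w : hh w * sqrt (1 - (sin w)^2 / 2) = 1.
Proof. unfold hh. assert (H := q_pos w). field. apply Rgt_not_eq, sqrt_lt_R0; lra. Qed.

Lemma hh_cont w : continuous hh w.
Proof.
  unfold hh. apply continuous_Rinv_comp.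
  apply continuous_sqrt_comp, cminus. apply cconst.
  apply (continuous_ext (fun y => sin y * sin y / 2)). intros; simpl; field.
  apply cmul. apply cmul; apply continuous_sin_comp, cid. apply cconst.
  assert (H := q_pos w). apply Rgt_not_eq, sqrt_lt_R0; lra.
Qed.

Lemma dPP_cont w : continuous dPP w.
Proof. unfold dPP. apply cmul. apply cmul. apply cconst. apply continuous_cos_comp, cid. apply hh_cont. Qed.

Lemma div_s2_sq x : (x / sqrt 2)² = x ^ 2 / 2.
Proof. destruct s2_facts as [H1 H2]. unfold Rsqr.
  replace ((x / sqrt 2) * (x / sqrt 2)) with (x*x / (sqrt 2 * sqrt 2)) by (field; lra). rewrite H2. field. Qed.

Lemma ratio_bound w : -1 < sin w / sqrt 2 < 1.
Proof.
  destruct s2_facts as [H1 H2]. assert (H := SIN_bound w).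
  assert (1 < sqrt 2). { apply Rnot_le_lt; intro. nra. }
  split. apply Rmult_lt_reg_r with (sqrt 2); auto. unfold Rdiv. rewrite Rmult_assoc, Rinv_l by lra. lra.
  apply Rmult_lt_reg_r with (sqrt 2); auto. unfold Rdiv. rewrite Rmult_assoc, Rinv_l by lra. lra.
Qed.

Lemma PP_deriv w : is_derive PP w (dPP w).
Proof.
  destruct s2_facts as [H1 H2].
  assert (Hb := ratio_bound w).
  assert (Ha : is_derive asin (sin w / sqrt 2) (1 / sqrt (1 - (sin w / sqrt 2)²))).
  { apply is_derive_Reals. apply (derive_pt_eq_1 _ _ _ (derivable_pt_asin _ Hb)). apply derive_pt_asin. }
  assert (Hg : is_derive (fun x => sin x / sqrt 2) w (cos w / sqrt 2)).
  { auto_derive. auto. field. lra. }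
  assert (Hc := is_derive_comp _ _ w _ _ Ha Hg).
  unfold PP. eapply is_derive_ext. intros t. reflexivity.
  replace (dPP w) with (2 * scal (cos w / sqrt 2) (1 / sqrt (1 - (sin w / sqrt 2)²))).
  apply (is_derive_scal (fun x => asin (sin x / sqrt 2))). exact Hc.
  unfold scal; simpl; unfold mult; simpl. unfold dPP, hh.
  rewrite div_s2_sq.
  assert (H := q_pos w). assert (Hq : 0 < sqrt (1 - sin w ^ 2 / 2)) by (apply sqrt_lt_R0; lra).
  set (q := sqrt (1 - sin w ^ 2 / 2)) in *. rewrite <- H2 at 1. field. lra.
Qed.

Lemma PP_sin_half w : sin (PP w / 2) = sin w / sqrt 2.
Proof. unfold PP. replace (2 * asin (sin w / sqrt 2) / 2) with (asin (sin w / sqrt 2)) by field.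
  apply sin_asin. assert (H := ratio_bound w). lra. Qed.

Lemma PP_cos_half w : cos (PP w / 2) * hh w = 1.
Proof. unfold PP. replace (2 * asin (sin w / sqrt 2) / 2) with (asin (sin w / sqrt 2)) by field.
  rewrite cos_asin. rewrite Rmult_comm. rewrite div_s2_sq. apply hh_inv.
  assert (H := ratio_bound w). lra. Qed.

Lemma PP_cos w : cos (PP w) = (cos w)^2.
Proof.
  replace (PP w) with (2 * (PP w / 2)) by field. rewrite cos_2a_sin, PP_sin_half.
  assert (H := sin2_cos2 w). unfold Rsqr in H.
  replace (1 - 2 * (sin w / sqrt 2) * (sin w / sqrt 2)) with (1 - 2 * (sin w / sqrt 2)²) by (unfold Rsqr; ring).
  rewrite div_s2_sq. simpl. lra.
Qed.

Lemma PP_sin w : sin (PP w) * hh w = sqrt 2 * sin w.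
Proof.
  replace (PP w) with (2 * (PP w / 2)) by field. rewrite sin_2a, PP_sin_half.
  assert (H := PP_cos_half w). destruct s2_facts as [H1 H2].
  replace (2 * (sin w / sqrt 2) * cos (PP w / 2) * hh w) with (2 * (sin w / sqrt 2) * (cos (PP w / 2) * hh w)) by ring.
  rewrite H. replace (2 * (sin w / sqrt 2) * 1) with (sqrt 2 * sqrt 2 * sin w / sqrt 2) by (rewrite H2; field; lra).
  field. lra.
Qed.

Lemma beta_facts alpha : 0 < alpha <= PI / 2 ->
  let beta := asin (sqrt 2 * sin (alpha / 2)) in
  0 < beta <= PI / 2 /\ PP beta = alpha /\ PP (- beta) = - alpha.
Proof.
  intros Ha beta. destruct s2_facts as [H1 H2].
  assert (HPI := PI_RGT_0).
  assert (Hs : 0 < sin (alpha / 2)) by (apply sin_gt_0; lra).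
  assert (Hs2 : sin (alpha / 2) <= sin (PI / 4)) by (apply sin_incr_1; lra).
  rewrite sin_PI4 in Hs2.
  assert (Hx : 0 < sqrt 2 * sin (alpha / 2) <= 1).
  { split. apply Rmult_lt_0_compat; lra.
    apply Rmult_le_reg_r with (/ sqrt 2). apply Rinv_0_lt_compat; lra.
    replace (sqrt 2 * sin (alpha / 2) * / sqrt 2) with (sin (alpha / 2)) by (field; lra). lra. }
  assert (Hsb : sin beta = sqrt 2 * sin (alpha / 2)) by (apply sin_asin; lra).
  assert (Hbb := asin_bound (sqrt 2 * sin (alpha / 2))). fold beta in Hbb.
  assert (Hb0 : 0 < beta).
  { apply Rnot_le_lt. intros Hle. assert (0 <= sin (- beta)) by (apply sin_ge_0; lra).
    rewrite sin_neg in H. lra. }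
  assert (HPb : PP beta = alpha).
  { unfold PP. rewrite Hsb. replace (sqrt 2 * sin (alpha / 2) / sqrt 2) with (sin (alpha / 2)) by (field; lra).
    rewrite asin_sin by lra. field. }
  split; [lra|]. split; auto.
  unfold PP. rewrite sin_neg. unfold Rdiv. rewrite Ropp_mult_distr_l_reverse, asin_opp.
  unfold PP, Rdiv in HPb. lra.
Qed.


Definition SS (beta nu w : R) : R := RInt (fun t => hh t / nu) (-beta) w.
Definition Psi (beta nu s : R) : R :=
  epsilon (inhabits 0) (fun w => -beta <= w <= beta /\ SS beta nu w = clamp 0 (SS beta nu beta) s).

Lemma int_deriv (g : R -> R) a : (forall x, continuous g x) ->
  forall x, is_derive (fun s => RInt g a s) x (g x).
Proof.
  intros Hc x. apply (is_derive_RInt g (fun s => RInt g a s) a x); [|apply Hc].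
  apply filter_forall. intros y. apply (RInt_correct (V:=R_CompleteNormedModule)). apply exc; auto.
Qed.

Lemma hnu_cont nu x : continuous (fun t => hh t / nu) x.
Proof. apply cmul. apply hh_cont. apply cconst. Qed.

Lemma SS_deriv beta nu w : is_derive (SS beta nu) w (hh w / nu).
Proof. unfold SS. apply (int_deriv (fun t => hh t / nu)). apply hnu_cont. Qed.

Lemma SS_cont beta nu w : continuous (SS beta nu) w.
Proof. apply (ex_derive_continuous (K:=R_AbsRing) (V:=R_NormedModule)). eexists. apply SS_deriv. Qed.

Lemma SS_m0 beta nu : SS beta nu (-beta) = 0.
Proof. unfold SS. exact (RInt_point (V:=R_CompleteNormedModule) _ _). Qed.

Lemma SS_mono beta nu x y : 0 < nu -> x <= y -> (y - x) / nu <= SS beta nu y - SS beta nu x.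
Proof.
  intros Hnu Hxy. unfold SS.
  assert (E : RInt (fun t => hh t / nu) (-beta) y - RInt (fun t => hh t / nu) (-beta) x = RInt (fun t => hh t / nu) x y).
  { rewrite <- (RInt_Chasles (V:=R_CompleteNormedModule) (fun t => hh t / nu) (-beta) x y).
    unfold plus; simpl; ring. apply exc, hnu_cont. apply exc, hnu_cont. }
  rewrite E.
  replace ((y - x) / nu) with (RInt (fun _ => / nu) x y).
  apply RInt_le; auto. apply exc; intros; apply cconst. apply exc, hnu_cont.
  intros t _. unfold Rdiv. rewrite <- (Rmult_1_l (/ nu)) at 1. apply Rmult_le_compat_r.
  left; apply Rinv_0_lt_compat; auto. apply hh_pos.
  rewrite RInt_const. unfold scal; simpl; unfold mult; simpl. field. lra.
Qed.

Lemma Psi_spec beta nu s : 0 < beta -> 0 < nu ->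
  -beta <= Psi beta nu s <= beta /\ SS beta nu (Psi beta nu s) = clamp 0 (SS beta nu beta) s.
Proof.
  intros Hb Hnu. unfold Psi. apply epsilon_spec.
  assert (HL : 0 <= SS beta nu beta).
  { rewrite <- (SS_m0 beta nu). assert (H := SS_mono beta nu (-beta) beta Hnu ltac:(lra)).
    assert (0 <= (beta - - beta) / nu) by (apply Rdiv_le_0_compat; lra). lra. }
  assert (Hc := clamp_in 0 (SS beta nu beta) s HL).
  destruct (IVT_gen (SS beta nu) (-beta) beta (clamp 0 (SS beta nu beta) s)) as [w [Hw1 Hw2]].
  - intros x. apply continuity_pt_filterlim. apply SS_cont.
  - rewrite SS_m0, Rmin_left, Rmax_right; lra.
  - exists w. rewrite Rmin_left, Rmax_right in Hw1 by lra. auto.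
Qed.

Lemma SS_range beta nu w : 0 < nu -> -beta <= w <= beta -> 0 <= SS beta nu w <= SS beta nu beta.
Proof.
  intros Hnu Hw. rewrite <- (SS_m0 beta nu).
  assert (H1 := SS_mono beta nu (-beta) w Hnu ltac:(lra)).
  assert (H2 := SS_mono beta nu w beta Hnu ltac:(lra)).
  assert (0 <= (w - - beta) / nu) by (apply Rdiv_le_0_compat; lra).
  assert (0 <= (beta - w) / nu) by (apply Rdiv_le_0_compat; lra). lra.
Qed.

Lemma SS_inj beta nu x y : 0 < nu -> SS beta nu x = SS beta nu y -> x = y.
Proof.
  intros Hnu E. destruct (Rtotal_order x y) as [H|[H|H]]; auto.
  - assert (Hm := SS_mono beta nu x y Hnu ltac:(lra)).
    assert (0 < (y - x) / nu) by (apply Rdiv_lt_0_compat; lra). lra.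
  - assert (Hm := SS_mono beta nu y x Hnu ltac:(lra)).
    assert (0 < (x - y) / nu) by (apply Rdiv_lt_0_compat; lra). lra.
Qed.

Lemma Psi_SS beta nu w : 0 < beta -> 0 < nu -> -beta <= w <= beta -> Psi beta nu (SS beta nu w) = w.
Proof.
  intros Hb Hnu Hw. destruct (Psi_spec beta nu (SS beta nu w) Hb Hnu) as [_ H].
  rewrite clamp_id in H by (apply SS_range; auto).
  apply (SS_inj beta nu); auto.
Qed.

Lemma Psi_lip beta nu s t : 0 < beta -> 0 < nu ->
  Rabs (Psi beta nu s - Psi beta nu t) <= nu * Rabs (s - t).
Proof.
  intros Hb Hnu.
  destruct (Psi_spec beta nu s Hb Hnu) as [_ Hs].
  destruct (Psi_spec beta nu t Hb Hnu) as [_ Ht].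
  assert (Hcl := clamp_lip 0 (SS beta nu beta) s t).
  rewrite <- Hs, <- Ht in Hcl.
  set (a := Psi beta nu s) in *. set (b := Psi beta nu t) in *.
  assert (Hk : Rabs (a - b) / nu <= Rabs (SS beta nu a - SS beta nu b)).
  { destruct (Rle_dec a b) as [Hab|Hab].
    - assert (H := SS_mono beta nu a b Hnu Hab).
      rewrite Rabs_left1 by lra. rewrite Rabs_left1. lra.
      assert (0 <= (b - a) / nu) by (apply Rdiv_le_0_compat; lra). lra.
    - assert (H := SS_mono beta nu b a Hnu ltac:(lra)).
      rewrite Rabs_right by lra. rewrite Rabs_right. lra.
      assert (0 <= (a - b) / nu) by (apply Rdiv_le_0_compat; lra). lra. }
  assert (Rabs (a - b) / nu <= Rabs (s - t)) by lra.
  apply Rmult_le_reg_r with (/ nu). apply Rinv_0_lt_compat; auto.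
  replace (nu * Rabs (s - t) * / nu) with (Rabs (s - t)) by (field; lra). exact H.
Qed.

Lemma Psi_cont beta nu x : 0 < beta -> 0 < nu -> continuous (Psi beta nu) x.
Proof. intros Hb Hnu. apply (lip_cont _ nu). lra. intros; apply Psi_lip; auto. Qed.

Lemma sub_lemma beta nu (G : R -> R) b V : 0 < beta -> 0 < nu -> -beta <= b <= beta ->
  (forall x, continuous G x) ->
  is_RInt (fun w => hh w / nu * G w) (-beta) b V ->
  is_RInt (fun s => G (Psi beta nu s)) 0 (SS beta nu b) V.
Proof.
  intros Hb Hnu Hbb HG HV.
  assert (Hc : forall x, continuous (fun s => G (Psi beta nu s)) x).
  { intros x. apply (continuous_comp (Psi beta nu) G). apply Psi_cont; auto. apply HG. }
  assert (H := is_RInt_comp (fun s => G (Psi beta nu s)) (SS beta nu) (fun t => hh t / nu) (-beta) b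
     (fun x _ => Hc _) (fun x _ => conj (SS_deriv beta nu x) (hnu_cont nu x))).
  rewrite SS_m0 in H.
  assert (H' : is_RInt (fun w => hh w / nu * G w) (-beta) b (RInt (fun s => G (Psi beta nu s)) 0 (SS beta nu b))).
  { eapply is_RInt_ext; [|exact H]. intros x Hx. unfold scal; simpl; unfold mult; simpl.
    rewrite Rmin_left, Rmax_right in Hx by lra. rewrite Psi_SS; auto. lra. }
  assert (E : RInt (fun s => G (Psi beta nu s)) 0 (SS beta nu b) = V).
  { apply (is_RInt_unique (V:=R_CompleteNormedModule)) in H'. apply (is_RInt_unique (V:=R_CompleteNormedModule)) in HV. congruence. }
  rewrite <- E. apply (RInt_correct (V:=R_CompleteNormedModule)). apply exc; auto.
Qed.

Ltac req := match goal with |- ?a = ?b => change (@eq R a b) end.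

Lemma partB alpha : 0 < alpha <= PI / 2 ->
  exists L' th k', Defs.admissible alpha L' th k' /\
    Defs.has_energy L' k' ((RInt (fun t => sqrt (cos t)) (-alpha) alpha)^2 / (4 * sin alpha)).
Proof.
  intros Ha. destruct (beta_facts alpha Ha) as [Hb [HPb HPmb]].
  set (beta := asin (sqrt 2 * sin (alpha / 2))) in *.
  set (D := RInt (fun t => sqrt (cos t)) (-alpha) alpha).
  destruct s2_facts as [Hs1 Hs2].
  assert (HPI := PI_RGT_0).
  assert (Hsa : 0 < sin alpha) by (apply sin_gt_0; lra).
  set (J := RInt (fun w => cos w ^ 2 * hh w) (-beta) beta).
  assert (HJc : forall x, continuous (fun w => cos w ^ 2 * hh w) x).
  { intros x. apply cmul. apply csq, continuous_cos_comp, cid. apply hh_cont. }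
  assert (HJ : is_RInt (fun w => cos w ^ 2 * hh w) (-beta) beta J).
  { apply (RInt_correct (V:=R_CompleteNormedModule)). apply exc; auto. }
  assert (HD : D = sqrt 2 * J).
  { assert (Hsub := is_RInt_comp (fun t => sqrt (cos t)) PP dPP (-beta) beta
       (fun x _ => continuous_sqrt_comp _ _ (continuous_cos_comp _ _ (cid _)))
       (fun x _ => conj (PP_deriv x) (dPP_cont x))).
    rewrite HPb, HPmb in Hsub. fold D in Hsub.
    assert (H2 := is_RInt_scal' _ _ _ _ (sqrt 2) HJ).
    assert (H3 : is_RInt (fun w => cos w ^ 2 * hh w * sqrt 2) (-beta) beta D).
    { eapply is_RInt_ext; [|exact Hsub]. intros x Hx. rewrite Rmin_left, Rmax_right in Hx by lra.
      unfold scal; simpl; unfold mult; simpl. unfold dPP. rewrite PP_cos, sqrt_pow2.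
      simpl; ring. apply cos_ge_0; lra. }
    apply (is_RInt_unique (V:=R_CompleteNormedModule)) in H3.
    apply (is_RInt_unique (V:=R_CompleteNormedModule)) in H2.
    rewrite <- H3. rewrite <- H2. apply RInt_ext. intros x _. change (cos x ^ 2 * hh x * sqrt 2 = sqrt 2 * (cos x ^ 2 * hh x)). ring. }
  assert (HJp : 0 < J).
  { unfold J. apply RInt_gt_0. lra.
    intros x Hx. apply Rmult_lt_0_compat. apply pow_lt, cos_gt_0; lra.
    assert (H := hh_pos x). lra. intros; apply HJc. }
  set (nu := J / (2 * sin alpha)).
  assert (Hnu : 0 < nu) by (apply Rdiv_lt_0_compat; lra).
  set (L' := SS beta nu beta).
  assert (HL' : 0 < L').
  { unfold L'. rewrite <- (SS_m0 beta nu). assert (H := SS_mono beta nu (-beta) beta Hnu ltac:(lra)).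
    assert (0 < (beta - - beta) / nu) by (apply Rdiv_lt_0_compat; lra). lra. }
  set (th := fun s => alpha + PP (Psi beta nu s)).
  set (k' := fun s => sqrt 2 * nu * cos (Psi beta nu s)).
  assert (Hsin0 : is_RInt sin (-beta) beta 0).
  { assert (H := is_RInt_derive (V:=R_CompleteNormedModule) (fun x => - cos x) sin (-beta) beta).
    replace 0 with (minus (- cos beta) (- cos (- beta))). apply H.
    intros x _. auto_derive; auto. ring. intros x _. apply continuous_sin_comp, cid.
    rewrite cos_neg. unfold minus, plus, opp; simpl. ring. }
  assert (HJnu : J / nu = 2 * sin alpha) by (unfold nu; field; lra).
  exists L', th, k'. split; [split; [|split; [|split; [|split; [|split]]]]|].
  - exact HL'.
  - intros s Hs. unfold k'. destruct (Psi_spec beta nu s) as [Hr _]; try lra.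
    apply Rmult_le_pos. apply Rmult_le_pos; lra. apply cos_ge_0; lra.
  - intros s Hs. apply coq_to_defs.
    destruct (Psi_spec beta nu s) as [Hr Hss]; try lra.
    rewrite clamp_id in Hss by (fold L'; lra).
    rewrite <- Hss at 1. unfold k'.
    apply (sub_lemma beta nu (fun w => sqrt 2 * nu * cos w)); try lra.
    intros x. apply cmul. apply cconst. apply continuous_cos_comp, cid.
    replace (th s) with (minus (PP (Psi beta nu s)) (PP (- beta))).
    eapply is_RInt_ext; [|apply (is_RInt_derive (V:=R_CompleteNormedModule) PP dPP)].
    intros x _. unfold dPP. req. field. lra.
    intros; apply PP_deriv. intros; apply dPP_cont.
    unfold th. rewrite HPmb. unfold minus, plus, opp; simpl. ring.
  - unfold th, L'. rewrite Psi_SS by lra. rewrite HPb. ring.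
  - apply coq_to_defs. unfold L', th.
    apply (sub_lemma beta nu (fun w => cos (alpha + PP w))); try lra.
    intros x. apply continuous_cos_comp, cplus. apply cconst.
    apply (ex_derive_continuous (K:=R_AbsRing) (V:=R_NormedModule)). eexists; apply PP_deriv.
    assert (H := is_RInt_lin _ _ _ _ _ _ (cos alpha / nu) (- (sqrt 2 * sin alpha) / nu) HJ Hsin0).
    replace (sin (2 * alpha)) with (cos alpha / nu * J + - (sqrt 2 * sin alpha) / nu * 0).
    eapply is_RInt_ext; [|exact H]. intros x _. simpl. req.
    rewrite cos_plus, PP_cos. assert (Hs := PP_sin x).
    replace (- (sqrt 2 * sin alpha) / nu * sin x) with (- sin alpha / nu * (sqrt 2 * sin x)) by (field; lra).
    rewrite <- Hs. field. lra.
    rewrite sin_2a. replace (cos alpha / nu * J + - (sqrt 2 * sin alpha) / nu * 0) with (cos alpha * (J / nu)) by (field; lra).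
    rewrite HJnu. ring.
  - apply coq_to_defs. unfold L', th.
    apply (sub_lemma beta nu (fun w => sin (alpha + PP w))); try lra.
    intros x. apply continuous_sin_comp, cplus. apply cconst.
    apply (ex_derive_continuous (K:=R_AbsRing) (V:=R_NormedModule)). eexists; apply PP_deriv.
    assert (H := is_RInt_lin _ _ _ _ _ _ (sin alpha / nu) (sqrt 2 * cos alpha / nu) HJ Hsin0).
    replace (1 - cos (2 * alpha)) with (sin alpha / nu * J + sqrt 2 * cos alpha / nu * 0).
    eapply is_RInt_ext; [|exact H]. intros x _. simpl. req.
    rewrite sin_plus, PP_cos. assert (Hs := PP_sin x).
    replace (sqrt 2 * cos alpha / nu * sin x) with (cos alpha / nu * (sqrt 2 * sin x)) by (field; lra).
    rewrite <- Hs. field. lra.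
    rewrite cos_2a_sin. replace (sin alpha / nu * J + sqrt 2 * cos alpha / nu * 0) with (sin alpha * (J / nu)) by (field; lra).
    rewrite HJnu. unfold Rsqr. ring.
  - unfold Defs.has_energy. apply coq_to_defs. unfold L', k'. fold D.
    apply (sub_lemma beta nu (fun w => (sqrt 2 * nu * cos w) ^ 2)); try lra.
    intros x. apply csq, cmul. apply cconst. apply continuous_cos_comp, cid.
    assert (H := is_RInt_scal' _ _ _ _ (2 * nu) HJ).
    replace (2 * (D ^ 2 / (4 * sin alpha))) with (2 * nu * J).
    eapply is_RInt_ext; [|exact H]. intros x _. simpl. req.
    replace (sqrt 2 * nu * cos x * (sqrt 2 * nu * cos x * 1)) with (sqrt 2 * sqrt 2 * (nu * cos x * (nu * cos x))) by ring.
    rewrite Hs2. field. lra.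
    rewrite HD. unfold nu. replace ((sqrt 2 * J) ^ 2) with (sqrt 2 * sqrt 2 * J ^ 2) by ring. rewrite Hs2. field. lra.
Qed.

Import Defs.

Lemma D_eq_2C alpha : RInt (fun t => sqrt (cos t)) (-alpha) alpha = 2 * RInt (fun t => sqrt (cos t)) 0 alpha.
Proof.
  set (f := fun t => sqrt (cos t)).
  assert (Hf : forall x, continuous f x) by (intros; apply continuous_sqrt_comp, continuous_cos_comp, cid).
  rewrite <- (RInt_Chasles (V:=R_CompleteNormedModule) f (-alpha) 0 alpha) by (apply exc; auto).
  assert (E1 : RInt f 0 (-alpha) = - RInt f 0 alpha).
  { replace (RInt f 0 (-alpha)) with (RInt f (-1*0+0) (-1*alpha+0)) by (f_equal; ring).
    rewrite <- (RInt_comp_lin (V:=R_CompleteNormedModule)) by (apply exc; auto).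
    rewrite (RInt_ext _ (fun y => opp (f y))).
    rewrite (RInt_opp (V:=R_CompleteNormedModule)) by (apply exc; auto). reflexivity.
    intros x _. unfold scal, f, opp; simpl; unfold mult; simpl.
    replace (-1 * x + 0) with (- x) by ring. rewrite cos_neg. ring. }
  assert (E2 : RInt f (-alpha) 0 = - RInt f 0 (-alpha)).
  { rewrite <- (opp_RInt_swap (V:=R_CompleteNormedModule)) by (apply exc; auto). reflexivity. }
  rewrite E2, E1. unfold plus; simpl. ring.
Qed.

Theorem mainTheorem8 (alpha L : R) (theta k : R -> R) (Emin : R) :
  0 < alpha <= PI / 2 ->
  is_minimizer alpha L theta k Emin ->
  continuous_on_interval k 0 L ->
  k 0 <= 1 -> k L <= 1 ->
  exists C : R, is_RInt (fun t => sqrt (cos t)) 0 alpha C /\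
    k 0 = k L /\
    (forall s, 0 <= s <= L ->
       / 2 * (k s) ^ 2 = / (2 * (sin alpha) ^ 2) * C ^ 2 * cos (theta s - alpha)) /\
    Emin = / sin alpha * C ^ 2.
Proof.
  intros Ha [Hadm [HE Hmin]] Hc _ _.
  assert (HL : 0 < L) by (destruct Hadm; auto).
  assert (HthL : theta L = 2 * alpha) by (destruct Hadm as [_ [_ [_ [H _]]]]; auto).
  destruct (partA alpha L theta k Emin Ha Hadm Hc HE) as [HA [[G [HGc HGe]] [Hth0 Hcpos]]].
  destruct (partB alpha Ha) as [L' [th [k' [Hadm' HE']]]].
  assert (Hle := Hmin L' th k' _ Hadm' HE').
  set (D := RInt (fun t => sqrt (cos t)) (-alpha) alpha) in *.
  set (C := RInt (fun t => sqrt (cos t)) 0 alpha).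
  assert (HDC : D = 2 * C) by apply D_eq_2C.
  set (lam := D / (2 * sin alpha)) in *.
  assert (HPI := PI_RGT_0).
  assert (Hsa : 0 < sin alpha) by (apply sin_gt_0; lra).
  assert (HGi : RInt.is_RInt G 0 L (2 * Emin - D ^ 2 / (2 * sin alpha))).
  { eapply is_RInt_ext; [|exact HA]. intros x Hx. rewrite Rmin_left, Rmax_right in Hx by lra.
    symmetry; apply HGe; lra. }
  assert (HG0 : forall x, 0 <= x <= L -> 0 <= G x).
  { intros x Hx. rewrite HGe by auto. apply pow2_ge_0. }
  assert (Hge : 0 <= 2 * Emin - D ^ 2 / (2 * sin alpha)).
  { apply (is_RInt_unique (V:=R_CompleteNormedModule)) in HGi. rewrite <- HGi.
    apply RInt_ge_0. lra. apply exc; auto. intros; apply HG0; lra. }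
  assert (HEq : Emin = D ^ 2 / (4 * sin alpha)).
  { apply Rle_antisym; auto.
    apply Rmult_le_reg_l with 2. lra.
    replace (2 * (D ^ 2 / (4 * sin alpha))) with (D ^ 2 / (2 * sin alpha)) by (field; lra). lra. }
  assert (Hz : 2 * Emin - D ^ 2 / (2 * sin alpha) = 0) by (rewrite HEq; field; lra).
  rewrite Hz in HGi.
  assert (Hk : forall s, 0 <= s <= L -> k s = lam * sqrt (cos (theta s - alpha))).
  { intros s Hs. assert (H := int_zero G 0 L HL HGc HG0 HGi s Hs).
    rewrite HGe in H by auto. apply Rminus_diag_uniq. destruct (Req_dec (k s - lam * sqrt (cos (theta s - alpha))) 0) as [Hz0|Hz0]; auto. exfalso; exact (pow_nonzero _ 2 Hz0 H). }
  exists C. split; [|split; [|split]].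
  - apply coq_to_defs. apply (RInt_correct (V:=R_CompleteNormedModule)). apply exc.
    intros; apply continuous_sqrt_comp, continuous_cos_comp, cid.
  - rewrite (Hk 0), (Hk L) by lra. rewrite Hth0, HthL.
    replace (0 - alpha) with (- alpha) by ring. replace (2 * alpha - alpha) with alpha by ring.
    rewrite cos_neg. reflexivity.
  - intros s Hs. rewrite (Hk s Hs).
    replace ((lam * sqrt (cos (theta s - alpha))) ^ 2) with (lam ^ 2 * (sqrt (cos (theta s - alpha)) * sqrt (cos (theta s - alpha)))) by ring.
    rewrite sqrt_sqrt by (apply Hcpos; auto). unfold lam. rewrite HDC. field. lra.
  - rewrite HEq, HDC. field. lra.
Qed.
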